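(* For any $\varepsilon\in(0,1)$, $\delta>0$ and $\tau>0$ there is a CTMC $\mathcal{M}=(S,P,E,s_{init},L)$ with states $s,s'$ such that $\{s,s'\}$ is a block of a $\tau$-quasi-lumpability $\Omega$ of $\mathcal{M}$, but the pair $(s,s')$ satisfies neither the $\delta$-condition $|\ln E(s)-\ln E(s')|\leq\delta$ nor the $\varepsilon$-condition (for all $A\subseteq S$: $P(s,A)\leq P(s',R(A))+\varepsilon$) with respect to the equivalence relation $R$ induced by $\Omega$.
   Context: A CTMC $(S,P,E,s_{init},L)$: finite $S$, transition probabilities $P\colon S\to\mathrm{Distr}(S)$ with $P(s,A)=\sum_{a\in A}P(s,a)$, exit rates $E\colon S\to\mathbb{R}_{>0}$, initial state, labeling. For $R\subseteq S\times S$ and $A\subseteq S$, $R(A)=\{t\mid\exists a\in A:(a,t)\in R\}$. For $\tau\geq0$, a partition $\Omega=\{\Omega_1,\dots,\Omega_m\}$ of $S$ is a $\tau$-quasi-lumpability if for all $i,j$ and all $s,s'\in\Omega_i$: $|P(s,\Omega_j)E(s)-P(s',\Omega_j)E(s')|\leq\tau$. *)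

(* Defs.v *)
From HB Require Import structures.
From mathcomp Require Import all_boot all_order all_algebra.
From mathcomp Require Import reals exp.
Set Implicit Arguments. Unset Strict Implicit. Unset Printing Implicit Defensive.
Import Order.TTheory GRing.Theory Num.Theory.
Local Open Scope ring_scope.

Record CTMC (R : realType) := MkCTMC {
  st : finType;
  AP : Type;
  Pr : st -> st -> R;
  Ex : st -> R;
  s_init : st;
  Lab : st -> AP -> bool;
}.

Definition wf_CTMC (R : realType) (M : CTMC R) : Prop :=
  (forall s t : st M, 0 <= Pr s t) /\
  (forall s : st M, \sum_(t : st M) Pr s t = 1) /\
  (forall s : st M, 0 < Ex s).

Definition PrSet (R : realType) (M : CTMC R) (s : st M) (A : {set st M}) : R :=
  \sum_(a in A) Pr s a.

Definition quasi_lumpability (R : realType) (M : CTMC R) (tau : R)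
    (Om : {set {set st M}}) : Prop :=
  partition Om [set: st M] /\
  forall Bi Bj, Bi \in Om -> Bj \in Om ->
  forall s s', s \in Bi -> s' \in Bi ->
    `| PrSet s Bj * Ex s - PrSet s' Bj * Ex s' | <= tau.

Definition induced_rel (T : finType) (Om : {set {set T}}) (s t : T) : bool :=
  [exists B in Om, (s \in B) && (t \in B)].

Definition rel_image (T : finType) (Rl : T -> T -> bool) (A : {set T}) : {set T} :=
  [set t | [exists a in A, Rl a t]].

Definition delta_condition (R : realType) (M : CTMC R) (delta : R) (s s' : st M) : Prop :=
  `| ln (Ex s) - ln (Ex s') | <= delta.

Definition eps_condition (R : realType) (M : CTMC R) (eps : R)
    (Rl : st M -> st M -> bool) (s s' : st M) : Prop :=
  forall A : {set st M}, PrSet s A <= PrSet s' (rel_image Rl A) + eps.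

(* Main.v *)
Require Import Defs.
From HB Require Import structures.
From mathcomp Require Import all_boot all_order all_algebra.
From mathcomp Require Import reals exp.
From mathcomp Require sequences.
From mathcomp Require Import ring lra.
Import Order.TTheory GRing.Theory Num.Theory.
Local Open Scope ring_scope.

Definition a0 : 'I_3 := Ordinal (isT : (0 < 3)%N).
Definition a1 : 'I_3 := Ordinal (isT : (1 < 3)%N).
Definition a2 : 'I_3 := Ordinal (isT : (2 < 3)%N).
Definition f3 (x : 'I_3) : bool := (val x == 2%N).
Definition Om3 : {set {set 'I_3}} := preim_partition f3 [set: 'I_3].

Lemma ord3_cases (x : 'I_3) : [\/ x = a0, x = a1 | x = a2].
Proof.
case: x => [[|[|[|n]]] H].
- by apply: Or31; apply: val_inj.
- by apply: Or32; apply: val_inj.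
- by apply: Or33; apply: val_inj.
- by [].
Qed.

Lemma Om3_blocks B : B \in Om3 -> forall s t, s \in B -> t \in B -> f3 s = f3 t.
Proof.
rewrite /Om3 /preim_partition /equivalence_partition => /imsetP [x _ ->] s t.
by rewrite !inE /= => /eqP <- /eqP <-.
Qed.

Lemma Om3_01 : [set a0; a1] \in Om3.
Proof.
rewrite /Om3 /preim_partition /equivalence_partition.
apply/imsetP; exists a0; first by rewrite inE.
apply/setP => y; rewrite !inE /=.
by case: (ord3_cases y) => ->.
Qed.

Section Constr.
Variables (R : realType) (delta tau : R).
Definition kk : R := sequences.expR (delta + 1).
Definition Pr3 (i j : 'I_3) : R :=
  if val i == 1%N then (val j == 0%N)%:R else (val j == 2%N)%:R.
Definition Ex3 (i : 'I_3) : R :=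
  if val i == 0%N then tau / kk else if val i == 1%N then tau else 1.
Definition M3 : CTMC R := @MkCTMC R ('I_3) unit Pr3 Ex3 a0 (fun _ _ => true).
End Constr.

Theorem proposition2 (R : realType) (eps delta tau : R) :
  0 < eps -> eps < 1 -> 0 < delta -> 0 < tau ->
  exists (M : CTMC R) (s s' : st M) (Om : {set {set st M}}),
    wf_CTMC M /\
    quasi_lumpability tau Om /\
    [set s; s'] \in Om /\
    ~ delta_condition delta s s' /\
    ~ eps_condition eps (induced_rel Om) s s'.
Proof.
move=> e0 e1 d0 t0.
have k1 : 1 < @kk R delta by rewrite /kk pexpR_gt1 // addr_gt0.
have k0 : 0 < @kk R delta by apply: lt_trans k1.
have tk0 : 0 < tau / @kk R delta by rewrite divr_gt0.
have tkt : tau / @kk R delta <= tau.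
  by rewrite ler_pdivrMr // ler_peMr // ltW.
exists (@M3 R delta tau), a0, a1, Om3.
have Pr_ge0 : forall s t : 'I_3, 0 <= @Pr3 R s t.
  by move=> s t; rewrite /Pr3; case: ifP.
have Pr_sum : forall s : 'I_3, \sum_(t : 'I_3) @Pr3 R s t = 1.
  move=> s; rewrite !big_ord_recr big_ord0 /= /Pr3.
  by case: ifP => _ /=; rewrite ?add0r ?addr0.
split; [split; [exact: Pr_ge0 | split; [exact: Pr_sum|]] |].
  by move=> s; rewrite /= /Ex3; case: ifP => _ //; case: ifP => _ //.
split; [split; [exact: preim_partitionP|] |].
  move=> Bi Bj HBi HBj s s' Hs Hs'.
  have hf := @Om3_blocks _ HBi _ _ Hs Hs'.
  have PS : forall x : 'I_3, 0 <= PrSet (M:=@M3 R delta tau) x Bj <= 1.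
    move=> x; apply/andP; split.
      by rewrite /PrSet; apply: sumr_ge0 => i _; apply: Pr_ge0.
    rewrite -(Pr_sum x) /PrSet.
    rewrite [X in _ <= X](bigID (fun i => i \in Bj)) /= lerDl.
    by apply: sumr_ge0 => i _; apply: Pr_ge0.
  case Hfs: (f3 s).
    move: hf; rewrite Hfs => /esym Hfs'.
    have -> : s = s' by apply: val_inj; move: Hfs Hfs'; rewrite /f3 => /eqP -> /eqP ->.
    by rewrite subrr normr0 ltW.
  move: hf; rewrite Hfs => /esym Hfs'.
  have Eb : forall x : 'I_3, f3 x = false -> 0 <= @Ex3 R delta tau x <= tau.
    move=> x; case: (ord3_cases x) => -> //= _; rewrite /Ex3 /=.
      by rewrite tkt ltW.
    by rewrite lexx ltW.
  have Pb : forall x : 'I_3, f3 x = false ->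
     0 <= PrSet (M:=@M3 R delta tau) x Bj * @Ex3 R delta tau x <= tau.
    move=> x hx; case/andP: (PS x) => p0 p1; case/andP: (Eb x hx) => q0 q1.
    rewrite mulr_ge0 //=; rewrite -[X in _ <= X]mul1r; exact: ler_pM.
  case/andP: (Pb s Hfs) => u0 u1; case/andP: (Pb s' Hfs') => v0 v1.
  rewrite /= ler_norml; apply/andP; split; lra.
split; first exact: Om3_01.
split.
  rewrite /delta_condition /= /Ex3 /=.
  rewrite ln_div ?posrE // /kk expRK.
  have -> : ln tau - (delta + 1) - ln tau = - (delta + 1) by ring.
  rewrite normrN gtr0_norm ?addr_gt0 //; lra.
move=> /(_ [set a2]).
have -> : PrSet (M:=@M3 R delta tau) a0 [set a2] = 1 by rewrite /PrSet big_set1.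
have -> : PrSet (M:=@M3 R delta tau) a1 (rel_image (induced_rel Om3) [set a2]) = 0.
  rewrite /PrSet big1 // => t.
  rewrite inE => /existsP [a /andP [ha /existsP [B /and3P [HB Ha Ht]]]].
  have := @Om3_blocks _ HB _ _ Ha Ht.
  move: ha; rewrite inE => /eqP -> /= /esym; rewrite /f3 /Pr3 /= => /eqP ->.
  by [].
lra.
Qed.
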